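(* Let $1\le p\ne q<\infty$ and let $T\in B(\ell^p)$ and $S\in B(\ell^q)$ be invertible. Then $T$ and $S$ are equivalent after extension but are not equivalent after one-sided extension.
   Context: $\ell^p=\ell^p(\mathbb N)$ over $\mathbb C$; $B(X,Y)$ denotes bounded linear operators; invertibility means bounded inverse; $X\oplus Y$ is the $\ell^2$-direct sum and $\mathrm{id}_X$ the identity. Operators $T\in B(X)$ and $S\in B(Y)$ are equivalent after extension if there exist Banach spaces $X'$, $Y'$ and invertible $E\in B(Y\oplus Y',X\oplus X')$, $F\in B(X\oplus X',Y\oplus Y')$ with $\begin{bmatrix}T&0\\0&\mathrm{id}_{X'}\end{bmatrix}=E\begin{bmatrix}S&0\\0&\mathrm{id}_{Y'}\end{bmatrix}F$. They are equivalent after one-sided extension if this holds with one of $X'$ or $Y'$ equal to the trivial space $\{0\}$. *)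

(* Defs.v *)
From Stdlib Require Import Reals ClassicalEpsilon.
Open Scope R_scope.

Record Cx : Type := mkCx { Re : R; Im : R }.
Definition Cx_mul (a b : Cx) : Cx :=
  mkCx (Re a * Re b - Im a * Im b) (Re a * Im b + Im a * Re b).
Definition Cx_one : Cx := mkCx 1 0.
Definition Cx_mone : Cx := mkCx (-1) 0.
Definition Cx_add (a b : Cx) : Cx := mkCx (Re a + Re b) (Im a + Im b).
Definition Cx_zero : Cx := mkCx 0 0.
Definition Cx_mod (a : Cx) : R := sqrt (Re a * Re a + Im a * Im a).

(** A space is given by a carrier type [V] together
    with the subset [mem] of its elements (this lets us take e.g. l^p as the
    set of p-summable sequences inside [nat -> Cx]), and the operations. *)
Record NSpace : Type := {
  V : Type;
  mem : V -> Prop;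
  vzero : V;
  vadd : V -> V -> V;
  vscal : Cx -> V -> V;
  vnorm : V -> R }.

Arguments mem {_} _.
Arguments vzero {_}.
Arguments vadd {_} _ _.
Arguments vscal {_} _ _.
Arguments vnorm {_} _.

Definition vsub {X : NSpace} (x y : V X) : V X := vadd x (vscal Cx_mone y).

Definition is_banach (X : NSpace) : Prop :=
  mem (@vzero X) /\
  (forall x y : V X, mem x -> mem y -> mem (vadd x y)) /\
  (forall (a : Cx) (x : V X), mem x -> mem (vscal a x)) /\
  (forall x y z : V X, mem x -> mem y -> mem z ->
     vadd x (vadd y z) = vadd (vadd x y) z) /\
  (forall x y : V X, mem x -> mem y -> vadd x y = vadd y x) /\
  (forall x : V X, mem x -> vadd vzero x = x) /\
  (forall x : V X, mem x -> vadd x (vscal Cx_mone x) = vzero) /\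
  (forall x : V X, mem x -> vscal Cx_one x = x) /\
  (forall (a b : Cx) (x : V X), mem x -> vscal (Cx_mul a b) x = vscal a (vscal b x)) /\
  (forall (a : Cx) (x y : V X), mem x -> mem y ->
     vscal a (vadd x y) = vadd (vscal a x) (vscal a y)) /\
  (forall (a b : Cx) (x : V X), mem x ->
     vscal (Cx_add a b) x = vadd (vscal a x) (vscal b x)) /\
  (forall x : V X, mem x -> 0 <= vnorm x) /\
  (forall x : V X, mem x -> vnorm x = 0 -> x = vzero) /\
  (forall (a : Cx) (x : V X), mem x -> vnorm (vscal a x) = Cx_mod a * vnorm x) /\
  (forall x y : V X, mem x -> mem y -> vnorm (vadd x y) <= vnorm x + vnorm y) /\
  (forall u : nat -> V X, (forall n, mem (u n)) ->
     (forall eps, 0 < eps -> exists N, forall m n, (N <= m)%nat -> (N <= n)%nat ->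
        vnorm (vsub (u m) (u n)) < eps) ->
     exists l, mem l /\ forall eps, 0 < eps -> exists N, forall n, (N <= n)%nat ->
        vnorm (vsub (u n) l) < eps).

Record BL (X Y : NSpace) : Type := {
  op :> V X -> V Y;
  op_mem : forall x, mem x -> mem (op x);
  op_add : forall x y, mem x -> mem y -> op (vadd x y) = vadd (op x) (op y);
  op_scal : forall a x, mem x -> op (vscal a x) = vscal a (op x);
  op_bdd : exists M, forall x, mem x -> vnorm (op x) <= M * vnorm x }.

Arguments op {_ _} _ _.

Definition invertible {X Y : NSpace} (E : BL X Y) : Prop :=
  exists G : BL Y X,
    (forall y, mem y -> op E (op G y) = y) /\
    (forall x, mem x -> op G (op E x) = x).

Definition dsum (X Y : NSpace) : NSpace := {|
  V := (V X * V Y)%type;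
  mem := fun z => mem (fst z) /\ mem (snd z);
  vzero := (vzero, vzero);
  vadd := fun z w => (vadd (fst z) (fst w), vadd (snd z) (snd w));
  vscal := fun a z => (vscal a (fst z), vscal a (snd z));
  vnorm := fun z => sqrt (vnorm (fst z) ^ 2 + vnorm (snd z) ^ 2) |}.

Definition triv : NSpace := {|
  V := unit; mem := fun _ => True; vzero := tt;
  vadd := fun _ _ => tt; vscal := fun _ _ => tt; vnorm := fun _ => 0 |}.

Definition rpow (a p : R) : R :=
  match Rle_dec a 0 with left _ => 0 | right _ => Rpower a p end.

Definition lp_summable (p : R) (x : nat -> Cx) : Prop :=
  exists L, infinite_sum (fun n => rpow (Cx_mod (x n)) p) L.

Definition lp_sum (p : R) (x : nat -> Cx) : R :=
  epsilon (inhabits 0) (fun L => infinite_sum (fun n => rpow (Cx_mod (x n)) p) L).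

Definition lp (p : R) : NSpace := {|
  V := nat -> Cx;
  mem := lp_summable p;
  vzero := fun _ => Cx_zero;
  vadd := fun x y n => Cx_add (x n) (y n);
  vscal := fun a x n => Cx_mul a (x n);
  vnorm := fun x => rpow (lp_sum p x) (1 / p) |}.

(* [T (+) id_X' = E (S (+) id_Y') F] on X (+) X' *)
Definition equiv_ext_via {X Y : NSpace} (T : BL X X) (S : BL Y Y)
    (X' Y' : NSpace) : Prop :=
  exists (E : BL (dsum Y Y') (dsum X X')) (F : BL (dsum X X') (dsum Y Y')),
    invertible E /\ invertible F /\
    forall z : V (dsum X X'), mem z ->
      (op T (fst z), snd z) =
      op E (op S (fst (op F z)), snd (op F z)).

Definition equiv_after_extension {X Y : NSpace} (T : BL X X) (S : BL Y Y) : Prop :=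
  exists X' Y' : NSpace, is_banach X' /\ is_banach Y' /\ equiv_ext_via T S X' Y'.

Definition equiv_after_one_sided_extension {X Y : NSpace} (T : BL X X) (S : BL Y Y)
  : Prop :=
  (exists X' : NSpace, is_banach X' /\ equiv_ext_via T S X' triv) \/
  (exists Y' : NSpace, is_banach Y' /\ equiv_ext_via T S triv Y').

(* Main.v *)
Require Import Defs.
From Stdlib Require Import Reals Lra Lia ClassicalEpsilon Classical FunctionalExtensionality.
Open Scope R_scope.

Lemma exp_le_exp x y : x <= y -> exp x <= exp y.
Proof. intros [H|H]. left; apply exp_increasing; auto. right; subst; auto. Qed.

Lemma rpow_nonneg a p : 0 <= rpow a p.
Proof. unfold rpow; destruct (Rle_dec a 0); [lra|]. unfold Rpower; left; apply exp_pos. Qed.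

Lemma rpow_pos a p : 0 < a -> 0 < rpow a p.
Proof. intro; unfold rpow; destruct (Rle_dec a 0); [lra|]. apply exp_pos. Qed.

Lemma rpow_eq a p : 0 < a -> rpow a p = Rpower a p.
Proof. intro; unfold rpow; destruct (Rle_dec a 0); [lra|]; auto. Qed.

Lemma rpow_0 p : rpow 0 p = 0.
Proof. unfold rpow; destruct (Rle_dec 0 0); lra. Qed.

Lemma rpow_le a b p : 0 <= p -> a <= b -> rpow a p <= rpow b p.
Proof.
  intros Hp Hab. destruct (Rle_dec a 0) as [Ha|Ha].
  - unfold rpow at 1; destruct (Rle_dec a 0); [apply rpow_nonneg|lra].
  - rewrite !rpow_eq by lra. apply Rle_Rpower_l; lra.
Qed.

Lemma rpow_lt a b p : 0 < p -> 0 <= a -> a < b -> rpow a p < rpow b p.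
Proof.
  intros Hp Ha Hab. destruct (Req_dec a 0) as [->|Ha'].
  - rewrite rpow_0; apply rpow_pos; lra.
  - rewrite !rpow_eq by lra. apply Rlt_Rpower_l; lra.
Qed.

Lemma rpow_le_inv a b p : 0 < p -> 0 <= b -> rpow a p <= rpow b p -> a <= b.
Proof.
  intros Hp Hb H. destruct (Rle_dec a b) as [|Hn]; auto.
  exfalso. assert (rpow b p < rpow a p) by (apply rpow_lt; lra). lra.
Qed.

Lemma rpow_mul a b p : 0 <= a -> 0 <= b -> rpow (a*b) p = rpow a p * rpow b p.
Proof.
  intros Ha Hb. destruct (Req_dec a 0) as [->|Ha']. { rewrite Rmult_0_l, rpow_0; ring. }
  destruct (Req_dec b 0) as [->|Hb']. { rewrite Rmult_0_r, rpow_0; ring. }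
  rewrite !rpow_eq; try lra. 2: apply Rmult_lt_0_compat; lra.
  rewrite Rpower_mult_distr; auto; lra.
Qed.

Lemma rpow_rpow a p q : 0 <= a -> rpow (rpow a p) q = rpow a (p*q).
Proof.
  intros Ha. destruct (Req_dec a 0) as [->|Ha']. { rewrite !rpow_0; auto. }
  rewrite (rpow_eq a) by lra. rewrite rpow_eq. 2: unfold Rpower; apply exp_pos.
  rewrite Rpower_mult, rpow_eq; auto; lra.
Qed.

Lemma rpow_1 a : 0 <= a -> rpow a 1 = a.
Proof.
  intros Ha. destruct (Req_dec a 0) as [->|]. { apply rpow_0. }
  rewrite rpow_eq by lra. apply Rpower_1; lra.
Qed.

Lemma rpow_inv a p : 0 < p -> 0 <= a -> rpow (rpow a p) (1/p) = a.
Proof. intros. rewrite rpow_rpow by auto. replace (p*(1/p)) with 1 by (field; lra). apply rpow_1; auto. Qed.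

Lemma rpow_inv' a p : 0 < p -> 0 <= a -> rpow (rpow a (1/p)) p = a.
Proof. intros. rewrite rpow_rpow by auto. replace (1/p*p) with 1 by (field; lra). apply rpow_1; auto. Qed.

Lemma rpow_one p : rpow 1 p = 1.
Proof. rewrite rpow_eq by lra. unfold Rpower; rewrite ln_1, Rmult_0_r; apply exp_0. Qed.

Lemma rpow_le_self a p : 1 <= p -> 0 <= a <= 1 -> rpow a p <= a.
Proof.
  intros Hp Ha. destruct (Req_dec a 0) as [->|]. { rewrite rpow_0; lra. }
  rewrite rpow_eq by lra. unfold Rpower.
  assert (ln a <= 0). { destruct (Req_dec a 1) as [->|]. rewrite ln_1; lra.
    left. rewrite <- ln_1. apply ln_increasing; lra. }
  rewrite <- (exp_ln a) at 2 by lra. apply exp_le_exp. nra.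
Qed.

Lemma rpow_ge1 a p : 0 <= p -> 1 <= a -> 1 <= rpow a p.
Proof. intros. rewrite <- (rpow_one p). apply rpow_le; auto. Qed.

Lemma rpow_plus a p q : 0 < a -> rpow a (p+q) = rpow a p * rpow a q.
Proof. intros. rewrite !rpow_eq by auto. apply Rpower_plus. Qed.

Lemma bernoulli t p : 1 <= p -> 0 < t -> 1 + p*(t-1) <= Rpower t p.
Proof.
  intros Hp Ht.
  set (f := fun x => Rpower x p - p*x).
  set (f' := fun x => p * Rpower x (p-1) - p).
  assert (D : forall c, 0 < c -> derivable_pt_lim f c (f' c)).
  { intros c Hc. unfold f, f'. apply derivable_pt_lim_minus.
    - apply derivable_pt_lim_power; auto.
    - replace p with (p*1) at 2 by ring. apply derivable_pt_lim_scal. apply derivable_pt_lim_id. }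
  assert (E1 : Rpower 1 p = 1) by (unfold Rpower; rewrite ln_1, Rmult_0_r; apply exp_0).
  destruct (Rtotal_order t 1) as [Hlt|[Heq|Hgt]].
  - destruct (MVT_cor2 f f' t 1 Hlt) as [c [Hc1 Hc2]].
    { intros c Hc; apply D; lra. }
    unfold f, f' in Hc1. rewrite E1 in Hc1.
    assert (Rpower c (p-1) <= 1).
    { rewrite <- (Rpower_O 1) at 2 by lra. replace 0 with (p-1 - (p-1)) by ring.
      unfold Rpower. apply exp_le_exp. rewrite ln_1. assert (ln c < 0).
      { rewrite <- ln_1. apply ln_increasing; lra. } nra. }
    assert (0 <= p * (1 - Rpower c (p-1)) * (1 - t)) by (apply Rmult_le_pos; nra).
    nra.
  - subst. rewrite E1. lra.
  - destruct (MVT_cor2 f f' 1 t Hgt) as [c [Hc1 Hc2]].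
    { intros c Hc; apply D; lra. }
    unfold f, f' in Hc1. rewrite E1 in Hc1.
    assert (1 <= Rpower c (p-1)).
    { rewrite <- (Rpower_O c) at 1 by lra. apply Rle_Rpower; lra. }
    assert (0 <= p * (Rpower c (p-1) - 1) * (t - 1)) by (apply Rmult_le_pos; nra).
    nra.
Qed.

Lemma tangent w m p : 1 <= p -> 0 <= w -> 0 < m ->
  rpow m p + p * rpow m p * (w/m - 1) <= rpow w p.
Proof.
  intros Hp Hw Hm. assert (Hmp := rpow_pos m p Hm).
  destruct (Req_dec w 0) as [->|Hw'].
  - rewrite rpow_0. unfold Rdiv; rewrite Rmult_0_l. nra.
  - assert (B := bernoulli (w/m) p Hp). assert (0 < w/m) by (apply Rdiv_lt_0_compat; lra).
    specialize (B H). rewrite <- rpow_eq in B by auto.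
    replace w with (m * (w/m)) at 2 by (field; lra).
    rewrite rpow_mul by lra. nra.
Qed.

Lemma convex l u v p : 1 <= p -> 0 <= l <= 1 -> 0 <= u -> 0 <= v ->
  rpow (l*u + (1-l)*v) p <= l * rpow u p + (1-l) * rpow v p.
Proof.
  intros Hp Hl Hu Hv. set (m := l*u+(1-l)*v).
  assert (0 <= m) by (unfold m; nra).
  destruct (Req_dec m 0) as [Hm0|Hm0].
  - rewrite Hm0, rpow_0. pose proof (rpow_nonneg u p). pose proof (rpow_nonneg v p). nra.
  - assert (Hm : 0 < m) by lra.
    pose proof (tangent u m p Hp Hu Hm). pose proof (tangent v m p Hp Hv Hm).
    assert (l * (u/m - 1) + (1-l)*(v/m - 1) = 0).
    { unfold m in *. field_simplify; try lra. }
    pose proof (rpow_pos m p Hm).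
    set (R0 := rpow m p) in *. set (U := rpow u p) in *. set (V0 := rpow v p) in *.
    assert (l * (R0 + p*R0*(u/m-1)) <= l * U) by (apply Rmult_le_compat_l; lra).
    assert ((1-l) * (R0 + p*R0*(v/m-1)) <= (1-l) * V0) by (apply Rmult_le_compat_l; lra).
    assert (R0 = l * (R0 + p*R0*(u/m-1)) + (1-l) * (R0 + p*R0*(v/m-1))).
    { transitivity (R0 + p*R0*(l * (u/m - 1) + (1-l)*(v/m - 1))). rewrite H2; ring. ring. }
    lra.
Qed.

Lemma div_nonneg a b : 0 <= a -> 0 < b -> 0 <= a / b.
Proof. intros. apply Rmult_le_pos; auto. left; apply Rinv_0_lt_compat; auto. Qed.

Fixpoint fsum (f : nat -> R) (n : nat) : R :=
  match n with O => 0 | S k => fsum f k + f k end.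

Lemma fsum_le f g n : (forall j, (j < n)%nat -> f j <= g j) -> fsum f n <= fsum g n.
Proof. induction n; simpl; intros H. lra. assert (f n <= g n) by (apply H; lia).
  assert (fsum f n <= fsum g n) by (apply IHn; intros; apply H; lia). lra. Qed.

Lemma fsum_ext f g n : (forall j, (j < n)%nat -> f j = g j) -> fsum f n = fsum g n.
Proof. induction n; simpl; intros H. lra. rewrite H, IHn by (intros; try apply H; lia). auto. Qed.

Lemma fsum_nonneg f n : (forall j, 0 <= f j) -> 0 <= fsum f n.
Proof. induction n; simpl; intros H. lra. pose proof (H n). specialize (IHn H). lra. Qed.

Lemma fsum_lin c1 c2 f g n : fsum (fun j => c1 * f j + c2 * g j) n = c1 * fsum f n + c2 * fsum g n.
Proof. induction n; simpl. ring. rewrite IHn; ring. Qed.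

Lemma fsum_plus f g n : fsum (fun j => f j + g j) n = fsum f n + fsum g n.
Proof. induction n; simpl. ring. rewrite IHn; ring. Qed.

Lemma fsum_mono f n m : (forall j, 0 <= f j) -> (n <= m)%nat -> fsum f n <= fsum f m.
Proof. intros H Hnm. induction Hnm. lra. simpl. specialize (H m). lra. Qed.

Lemma fsum_term f n j : (forall j, 0 <= f j) -> (j < n)%nat -> f j <= fsum f n.
Proof. intros H Hj. apply Rle_trans with (fsum f (S j)). simpl.
  pose proof (fsum_nonneg f j H). lra. apply fsum_mono; auto. Qed.

Lemma fsum_zero_terms f n : (forall j, 0 <= f j) -> fsum f n = 0 -> forall j, (j < n)%nat -> f j = 0.
Proof. intros H H0 j Hj. pose proof (fsum_term f n j H Hj). specialize (H j). lra. Qed.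

Definition fnorm (p : R) (a : nat -> R) (n : nat) : R :=
  rpow (fsum (fun j => rpow (a j) p) n) (1/p).

Lemma fnorm_nonneg p a n : 0 <= fnorm p a n.
Proof. apply rpow_nonneg. Qed.

Lemma fnorm_pow p a n : 0 < p -> rpow (fnorm p a n) p = fsum (fun j => rpow (a j) p) n.
Proof. intros. unfold fnorm. apply rpow_inv'; auto. apply fsum_nonneg; intros; apply rpow_nonneg. Qed.

Lemma fnorm_le p a b n : 0 < p -> (forall j, (j < n)%nat -> 0 <= a j <= b j) -> fnorm p a n <= fnorm p b n.
Proof. intros Hp H. unfold fnorm. apply rpow_le. apply Rlt_le, Rdiv_lt_0_compat; lra.
  apply fsum_le. intros j Hj. apply rpow_le; [lra|]. apply H; auto. Qed.

Lemma fnorm_zero p a n : 0 < p -> (forall j, 0 <= a j) -> fnorm p a n = 0 -> forall j, (j < n)%nat -> a j = 0.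
Proof.
  intros Hp Ha H j Hj. assert (Hs : fsum (fun j => rpow (a j) p) n = 0).
  { rewrite <- fnorm_pow by auto. rewrite H. apply rpow_0. }
  pose proof (fsum_zero_terms _ n (fun j => rpow_nonneg (a j) p) Hs j Hj). simpl in H0.
  destruct (Ha j) as [Hl|]; auto. pose proof (rpow_pos (a j) p Hl). lra.
Qed.

Lemma minkowski_fin p a b n : 1 <= p -> (forall j, 0 <= a j) -> (forall j, 0 <= b j) ->
  fnorm p (fun j => a j + b j) n <= fnorm p a n + fnorm p b n.
Proof.
  intros Hp Ha Hb. set (al := fnorm p a n). set (be := fnorm p b n).
  assert (Hal : 0 <= al) by apply fnorm_nonneg. assert (Hbe : 0 <= be) by apply fnorm_nonneg.
  destruct (Req_dec al 0) as [H0|H0].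
  { pose proof (fnorm_zero p a n ltac:(lra) Ha H0).
    rewrite H0, Rplus_0_l. unfold be, fnorm. right. f_equal. apply fsum_ext. intros j Hj. rewrite H; auto. f_equal; ring. }
  destruct (Req_dec be 0) as [H1|H1].
  { pose proof (fnorm_zero p b n ltac:(lra) Hb H1).
    rewrite H1, Rplus_0_r. unfold al, fnorm. right. f_equal. apply fsum_ext. intros j Hj. rewrite H; auto. f_equal; ring. }
  assert (Sa := fnorm_pow p a n ltac:(lra)). assert (Sb := fnorm_pow p b n ltac:(lra)).
  fold al in Sa. fold be in Sb.
  set (SA := fsum (fun j : nat => rpow (a j) p) n) in *.
  set (SB := fsum (fun j : nat => rpow (b j) p) n) in *.
  assert (HSA : 0 < SA) by (rewrite <- Sa; apply rpow_pos; lra).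
  assert (HSB : 0 < SB) by (rewrite <- Sb; apply rpow_pos; lra).
  set (l := al / (al + be)).
  assert (Hl : 0 <= l <= 1). { unfold l; split. apply Rmult_le_pos; [lra|]. left; apply Rinv_0_lt_compat; lra.
    apply Rmult_le_reg_r with (al+be). lra. unfold Rdiv. rewrite Rmult_assoc, Rinv_l by lra. lra. }
  set (K := rpow (al + be) p).
  assert (Hpt : forall j, rpow (a j + b j) p <= K * (l * rpow (a j) p / SA + (1-l) * rpow (b j) p / SB)).
  { intro j. assert (E : a j + b j = (al+be) * (l * (a j / al) + (1-l) * (b j / be))).
    { unfold l. field. lra. }
    rewrite E, rpow_mul; [| lra |].
    2: { apply Rplus_le_le_0_compat; apply Rmult_le_pos; try lra; apply Rmult_le_pos; try apply Ha; try apply Hb;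
         left; apply Rinv_0_lt_compat; lra. }
    apply Rmult_le_compat_l. apply rpow_nonneg.
    eapply Rle_trans. apply convex; auto.
    { apply div_nonneg; [apply Ha|lra]. } { apply div_nonneg; [apply Hb|lra]. }
    assert (EA : rpow (a j / al) p = rpow (a j) p / SA).
    { rewrite <- Sa. replace (a j) with (al * (a j / al)) at 2 by (field; lra).
      rewrite (rpow_mul al) by first [lra | apply div_nonneg; [apply Ha|lra]].
      field. apply Rgt_not_eq. apply rpow_pos; lra. }
    assert (EB : rpow (b j / be) p = rpow (b j) p / SB).
    { rewrite <- Sb. replace (b j) with (be * (b j / be)) at 2 by (field; lra).
      rewrite (rpow_mul be) by first [lra | apply div_nonneg; [apply Hb|lra]].
      field. apply Rgt_not_eq. apply rpow_pos; lra. }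
    rewrite EA, EB. unfold Rdiv; lra. }
  assert (Hs : fsum (fun j => rpow (a j + b j) p) n <= K).
  { eapply Rle_trans. apply fsum_le. intros j _. apply Hpt.
    replace (fun j => K * (l * rpow (a j) p / SA + (1 - l) * rpow (b j) p / SB))
      with (fun j => (K*l/SA) * rpow (a j) p + (K*(1-l)/SB) * rpow (b j) p).
    2: { apply functional_extensionality; intro j; field; lra. }
    rewrite fsum_lin. fold SA SB. right; field; lra. }
  unfold fnorm at 1. replace (al + be) with (rpow K (1/p)).
  apply rpow_le; auto. apply Rlt_le, Rdiv_lt_0_compat; lra.
  unfold K. apply rpow_inv; lra.
Qed.

Lemma Cx_eta a : a = mkCx (Re a) (Im a). Proof. destruct a; auto. Qed.
Lemma Cx_ext a b : Re a = Re b -> Im a = Im b -> a = b.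
Proof. destruct a, b; simpl; intros; subst; auto. Qed.

Lemma sq2 a b : 0 <= a*a+b*b. Proof. nra. Qed.

Lemma Cx_mod_nonneg a : 0 <= Cx_mod a. Proof. apply sqrt_pos. Qed.

Lemma Cx_mod_add a b : Cx_mod (Cx_add a b) <= Cx_mod a + Cx_mod b.
Proof.
  unfold Cx_mod, Cx_add; simpl. destruct a as [x y], b as [u v]; simpl.
  pose proof (sqrt_cauchy x y u v). unfold Rsqr in H.
  pose proof (sqrt_pos (x*x+y*y)). pose proof (sqrt_pos (u*u+v*v)).
  apply Rsqr_incr_0_var; [|lra]. unfold Rsqr.
  rewrite (sqrt_sqrt ((x + u) * (x + u) + (y + v) * (y + v))) by apply sq2.
  replace ((sqrt (x * x + y * y) + sqrt (u * u + v * v)) * (sqrt (x * x + y * y) + sqrt (u * u + v * v)))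
    with (sqrt (x * x + y * y) * sqrt (x * x + y * y) + sqrt (u * u + v * v) * sqrt (u * u + v * v)
          + 2 * (sqrt (x * x + y * y) * sqrt (u * u + v * v))) by ring.
  rewrite (sqrt_sqrt (x*x+y*y)) by apply sq2. rewrite (sqrt_sqrt (u*u+v*v)) by apply sq2. nra.
Qed.

Lemma Cx_mod_mul a b : Cx_mod (Cx_mul a b) = Cx_mod a * Cx_mod b.
Proof.
  unfold Cx_mod, Cx_mul; simpl. destruct a as [x y], b as [u v]; simpl.
  rewrite <- sqrt_mult by apply sq2. f_equal. ring.
Qed.

Lemma Cx_mod_zero : Cx_mod Cx_zero = 0.
Proof. unfold Cx_mod; simpl. rewrite Rmult_0_l, Rplus_0_l. apply sqrt_0. Qed.

Lemma Cx_mod_one : Cx_mod Cx_one = 1.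
Proof. unfold Cx_mod; simpl. replace (1*1+0*0) with 1 by ring. apply sqrt_1. Qed.

Lemma Cx_mod_mone : Cx_mod Cx_mone = 1.
Proof. unfold Cx_mod; simpl. replace (-1*-1+0*0) with 1 by ring. apply sqrt_1. Qed.

Lemma Cx_mod_eq0 a : Cx_mod a = 0 -> a = Cx_zero.
Proof.
  unfold Cx_mod. destruct a as [x y]; simpl. intro H. apply sqrt_eq_0 in H; [|nra].
  unfold Cx_zero. f_equal; nra.
Qed.

Lemma Cx_Re_le a : Rabs (Re a) <= Cx_mod a.
Proof.
  unfold Cx_mod. destruct a as [x y]; simpl. rewrite <- sqrt_square with (x := Rabs x) by apply Rabs_pos.
  apply sqrt_le_1_alt. rewrite <- Rabs_mult. rewrite Rabs_right by nra. nra.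
Qed.

Lemma Cx_Im_le a : Rabs (Im a) <= Cx_mod a.
Proof.
  unfold Cx_mod. destruct a as [x y]; simpl. rewrite <- sqrt_square with (x := Rabs y) by apply Rabs_pos.
  apply sqrt_le_1_alt. rewrite <- Rabs_mult. rewrite Rabs_right by nra. nra.
Qed.

Lemma Cx_mod_le_ReIm a : Cx_mod a <= Rabs (Re a) + Rabs (Im a).
Proof.
  unfold Cx_mod. destruct a as [x y]; simpl.
  rewrite <- sqrt_square with (x := Rabs x + Rabs y) by (pose proof (Rabs_pos x); pose proof (Rabs_pos y); lra).
  apply sqrt_le_1_alt. pose proof (Rabs_pos x); pose proof (Rabs_pos y).
  assert (x*x = Rabs x * Rabs x) by (rewrite <- Rabs_mult; rewrite Rabs_right; nra).
  assert (y*y = Rabs y * Rabs y) by (rewrite <- Rabs_mult; rewrite Rabs_right; nra). nra.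
Qed.

Lemma sum_f_fsum f n : sum_f_R0 f n = fsum f (S n).
Proof. induction n; simpl. ring. rewrite IHn. simpl. ring. Qed.

Lemma infs_plus f g A B : infinite_sum f A -> infinite_sum g B -> infinite_sum (fun j => f j + g j) (A+B).
Proof.
  intros Hf Hg. unfold infinite_sum. eapply Un_cv_ext. intro n; symmetry; apply sum_plus.
  apply CV_plus; auto.
Qed.

Lemma sum_scal' c f n : sum_f_R0 (fun j => c * f j) n = c * sum_f_R0 f n.
Proof. induction n; simpl. ring. rewrite IHn; ring. Qed.

Lemma infs_scal c f A : infinite_sum f A -> infinite_sum (fun j => c * f j) (c*A).
Proof.
  intros Hf. unfold infinite_sum. apply Un_cv_ext with (fun n => c * sum_f_R0 f n).
  intro n; symmetry; apply sum_scal'.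
  apply (CV_mult (fun _ => c)); auto. intros e He. exists O. intros. unfold Rdist. rewrite Rminus_diag, Rabs_R0. lra.
Qed.

Lemma infs_fsum_le f L n : (forall j, 0 <= f j) -> infinite_sum f L -> fsum f n <= L.
Proof.
  intros Hf HL. apply Rle_trans with (fsum f (S n)). apply fsum_mono; auto.
  rewrite <- sum_f_fsum. apply growing_ineq; auto.
  intro k. unfold Un_growing. simpl. specialize (Hf (S k)). lra.
Qed.

Lemma infs_le f L K : infinite_sum f L -> (forall n, fsum f n <= K) -> L <= K.
Proof.
  intros HL HK. destruct (Rle_dec L K) as [|Hn]; auto. exfalso.
  destruct (HL (L-K)) as [N HN]; [lra|]. specialize (HN N (le_n N)).
  rewrite sum_f_fsum in HN. specialize (HK (S N)). unfold Rdist in HN.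
  apply Rabs_def2 in HN. lra.
Qed.

Lemma infs_of_bdd f K : (forall j, 0 <= f j) -> (forall n, fsum f n <= K) -> exists L, infinite_sum f L.
Proof.
  intros Hf HK. destruct (growing_cv (sum_f_R0 f)) as [L HL].
  - intro k. unfold Un_growing. simpl. specialize (Hf (S k)). lra.
  - exists K. intros x [n ->]. rewrite sum_f_fsum. apply HK.
  - exists L; exact HL.
Qed.

Lemma infs_tail f L : (forall j, 0 <= f j) -> infinite_sum f L ->
  forall t, 0 < t -> forall m, exists n, (m <= n)%nat /\ L - fsum f n <= t.
Proof.
  intros Hf HL t Ht m. destruct (HL t) as [N HN]; [lra|].
  exists (S (max N m)). split. lia. specialize (HN (max N m) ltac:(lia)).
  rewrite sum_f_fsum in HN. unfold Rdist in HN. apply Rabs_def2 in HN. lra.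
Qed.

Lemma infs_finite f n : (forall j, (n <= j)%nat -> f j = 0) -> infinite_sum f (fsum f n).
Proof.
  intros Hf e He. exists n. intros k Hk. rewrite sum_f_fsum.
  replace (fsum f (S k)) with (fsum f n). unfold Rdist. rewrite Rminus_diag, Rabs_R0; lra.
  assert (forall d, fsum f (n + d) = fsum f n).
  { induction d. rewrite Nat.add_0_r; auto. replace (n + S d)%nat with (S (n+d)) by lia. simpl.
    rewrite IHd, Hf by lia. ring. }
  replace (S k) with (n + (S k - n))%nat by lia. rewrite H. auto.
Qed.

Definition term (p : R) (x : nat -> Cx) (j : nat) : R := rpow (Cx_mod (x j)) p.
Definition psum p x n := fsum (term p x) n.

Lemma term_nonneg p x j : 0 <= term p x j. Proof. apply rpow_nonneg. Qed.

Lemma lp_sum_spec p x : lp_summable p x -> infinite_sum (term p x) (lp_sum p x).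
Proof. intro H. unfold lp_sum. apply epsilon_spec. exact H. Qed.

Lemma lp_sum_eq p x L : infinite_sum (term p x) L -> lp_sum p x = L.
Proof. intro H. eapply uniqueness_sum. apply lp_sum_spec. exists L; exact H. exact H. Qed.

Lemma psum_le p x n : lp_summable p x -> psum p x n <= lp_sum p x.
Proof. intro H. apply infs_fsum_le. apply term_nonneg. apply lp_sum_spec; auto. Qed.

Lemma lp_sum_nonneg p x : lp_summable p x -> 0 <= lp_sum p x.
Proof. intro H. apply Rle_trans with (psum p x 0). unfold psum; simpl; lra. apply psum_le; auto. Qed.

Lemma lp_sum_le p x K : lp_summable p x -> (forall n, psum p x n <= K) -> lp_sum p x <= K.
Proof. intros H HK. eapply infs_le. apply lp_sum_spec; auto. exact HK. Qed.

Lemma mem_bdd p x K : (forall n, psum p x n <= K) -> lp_summable p x.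
Proof. intros HK. apply (infs_of_bdd _ K); auto. apply term_nonneg. Qed.

Definition nrm (p : R) (x : nat -> Cx) : R := rpow (lp_sum p x) (1/p).
Definition mx (x : nat -> Cx) : nat -> R := fun j => Cx_mod (x j).

Lemma psum_fnorm p x n : 0 < p -> psum p x n = rpow (fnorm p (mx x) n) p.
Proof. intros. rewrite fnorm_pow; auto. Qed.

Lemma nrm_nonneg p x : 0 <= nrm p x. Proof. apply rpow_nonneg. Qed.

Lemma fnorm_le_nrm p x n : 0 < p -> lp_summable p x -> fnorm p (mx x) n <= nrm p x.
Proof. intros Hp H. unfold fnorm, nrm. apply rpow_le. apply Rlt_le, Rdiv_lt_0_compat; lra.
  apply psum_le; auto. Qed.

Lemma nrm_le p x K : 0 < p -> lp_summable p x -> 0 <= K -> (forall n, fnorm p (mx x) n <= K) -> nrm p x <= K.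
Proof.
  intros Hp H HK Hn. unfold nrm. rewrite <- (rpow_inv K p) by auto.
  apply rpow_le. apply Rlt_le, Rdiv_lt_0_compat; lra.
  apply lp_sum_le; auto. intro n. rewrite psum_fnorm by auto. apply rpow_le; [lra|]. auto.
Qed.

Lemma mem_fnorm p x K : 0 < p -> (forall n, fnorm p (mx x) n <= K) -> lp_summable p x.
Proof. intros Hp Hn. apply (mem_bdd p x (rpow K p)). intro n. rewrite psum_fnorm by auto.
  apply rpow_le; [lra|]. auto. Qed.

Lemma coord_le p x j : 0 < p -> lp_summable p x -> Cx_mod (x j) <= nrm p x.
Proof.
  intros Hp H. eapply Rle_trans; [|apply (fnorm_le_nrm p x (S j) Hp H)].
  unfold fnorm. rewrite <- (rpow_inv (Cx_mod (x j)) p) by (auto; apply Cx_mod_nonneg).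
  apply rpow_le. apply Rlt_le, Rdiv_lt_0_compat; lra.
  apply (fsum_term (fun j0 => rpow (mx x j0) p)). intros; apply rpow_nonneg. lia.
Qed.

Definition sadd (x y : nat -> Cx) : nat -> Cx := fun n => Cx_add (x n) (y n).
Definition sscal (a : Cx) (x : nat -> Cx) : nat -> Cx := fun n => Cx_mul a (x n).
Definition szero : nat -> Cx := fun _ => Cx_zero.

Lemma minkowski p x y : 1 <= p -> lp_summable p x -> lp_summable p y ->
  lp_summable p (sadd x y) /\ nrm p (sadd x y) <= nrm p x + nrm p y.
Proof.
  intros Hp Hx Hy.
  assert (B : forall n, fnorm p (mx (sadd x y)) n <= nrm p x + nrm p y).
  { intro n. eapply Rle_trans. apply (fnorm_le p _ (fun j => mx x j + mx y j)). lra.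
    intros j _. split. apply Cx_mod_nonneg. apply Cx_mod_add.
    eapply Rle_trans. apply minkowski_fin; auto; intros; apply Cx_mod_nonneg.
    pose proof (fnorm_le_nrm p x n ltac:(lra) Hx). pose proof (fnorm_le_nrm p y n ltac:(lra) Hy). lra. }
  assert (M : lp_summable p (sadd x y)) by (eapply mem_fnorm; [lra|exact B]).
  split; auto. apply nrm_le; auto. lra. pose proof (nrm_nonneg p x); pose proof (nrm_nonneg p y); lra.
Qed.

Lemma scal_sum_eq p a x : 0 < p -> lp_summable p x ->
  lp_summable p (sscal a x) /\ lp_sum p (sscal a x) = rpow (Cx_mod a) p * lp_sum p x.
Proof.
  intros Hp Hx. assert (H := infs_scal (rpow (Cx_mod a) p) _ _ (lp_sum_spec p x Hx)).
  assert (E : (fun j => rpow (Cx_mod a) p * term p x j) = term p (sscal a x)).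
  { apply functional_extensionality; intro j. unfold term, sscal. rewrite Cx_mod_mul, rpow_mul; auto; apply Cx_mod_nonneg. }
  rewrite E in H. split. exists (rpow (Cx_mod a) p * lp_sum p x); auto. apply lp_sum_eq; auto.
Qed.

Lemma nrm_scal p a x : 0 < p -> lp_summable p x -> nrm p (sscal a x) = Cx_mod a * nrm p x.
Proof.
  intros Hp Hx. destruct (scal_sum_eq p a x Hp Hx) as [_ E]. unfold nrm. rewrite E.
  rewrite rpow_mul by (try apply rpow_nonneg; apply lp_sum_nonneg; auto).
  rewrite rpow_inv; auto. apply Cx_mod_nonneg.
Qed.

Lemma disj_sum p x y : 1 <= p -> lp_summable p x -> lp_summable p y ->
  (forall j, x j = Cx_zero \/ y j = Cx_zero) ->
  lp_sum p (sadd x y) = lp_sum p x + lp_sum p y.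
Proof.
  intros Hp Hx Hy Hd. apply lp_sum_eq.
  assert (E : term p (sadd x y) = fun j => term p x j + term p y j).
  { apply functional_extensionality; intro j. unfold term, sadd.
    destruct (Hd j) as [E|E]; rewrite E.
    - replace (Cx_add Cx_zero (y j)) with (y j) by (apply Cx_ext; simpl; ring).
      rewrite Cx_mod_zero, rpow_0. ring.
    - replace (Cx_add (x j) Cx_zero) with (x j) by (apply Cx_ext; simpl; ring).
      rewrite Cx_mod_zero, rpow_0. ring. }
  rewrite E. apply infs_plus; apply lp_sum_spec; auto.
Qed.

Lemma finite_supp p x n : 0 < p -> (forall j, (n <= j)%nat -> x j = Cx_zero) ->
  lp_summable p x /\ lp_sum p x = psum p x n.
Proof.
  intros Hp H. assert (I : infinite_sum (term p x) (psum p x n)).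
  { apply infs_finite. intros j Hj. unfold term. rewrite H, Cx_mod_zero, rpow_0; auto. }
  split. exists (psum p x n); auto. apply lp_sum_eq; auto.
Qed.

Definition ssub x y := sadd x (sscal Cx_mone y).

Lemma mem_add p x y : 1 <= p -> lp_summable p x -> lp_summable p y -> lp_summable p (sadd x y).
Proof. intros; apply minkowski; auto. Qed.
Lemma mem_scal p a x : 1 <= p -> lp_summable p x -> lp_summable p (sscal a x).
Proof. intros; apply scal_sum_eq; auto; lra. Qed.
Lemma mem_sub p x y : 1 <= p -> lp_summable p x -> lp_summable p y -> lp_summable p (ssub x y).
Proof. intros; apply mem_add; auto; apply mem_scal; auto. Qed.
Lemma mem_zero p : 0 < p -> lp_summable p szero.
Proof. intros. apply (finite_supp p szero 0); auto. Qed.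

Lemma fsum_const a n : fsum (fun _ => a) n = INR n * a.
Proof. induction n; simpl fsum. simpl; ring. rewrite IHn, S_INR; ring. Qed.

Lemma ssub_Re x y j : Re (ssub x y j) = Re (x j) - Re (y j).
Proof. unfold ssub, sadd, sscal; simpl; ring. Qed.
Lemma ssub_Im x y j : Im (ssub x y j) = Im (x j) - Im (y j).
Proof. unfold ssub, sadd, sscal; simpl; ring. Qed.

Lemma nrm_sub_sym p x y : 1 <= p -> lp_summable p x -> lp_summable p y -> nrm p (ssub x y) = nrm p (ssub y x).
Proof.
  intros. replace (ssub x y) with (sscal Cx_mone (ssub y x)).
  rewrite nrm_scal, Cx_mod_mone by (try lra; apply mem_sub; auto). ring.
  apply functional_extensionality; intro j; apply Cx_ext; unfold ssub, sadd, sscal; simpl; ring.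
Qed.

Lemma finite_close (u : nat -> nat -> Cx) (l : nat -> Cx) :
  (forall j, Un_cv (fun n => Re (u n j)) (Re (l j))) ->
  (forall j, Un_cv (fun n => Im (u n j)) (Im (l j))) ->
  forall d, 0 < d -> forall J, exists K, forall k, (K <= k)%nat -> forall j, (j < J)%nat ->
    Rabs (Re (u k j) - Re (l j)) < d /\ Rabs (Im (u k j) - Im (l j)) < d.
Proof.
  intros HR HI d Hd J. induction J.
  - exists O. intros; lia.
  - destruct IHJ as [K HK]. destruct (HR J d Hd) as [K1 H1]. destruct (HI J d Hd) as [K2 H2].
    exists (max K (max K1 K2)). intros k Hk j Hj.
    destruct (Nat.eq_dec j J) as [->|Hne].
    + split; [apply H1|apply H2]; lia.
    + apply HK; lia.
Qed.

Lemma lp_complete p : 1 <= p -> forall u : nat -> nat -> Cx, (forall n, lp_summable p (u n)) ->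
     (forall eps, 0 < eps -> exists N, forall m n, (N <= m)%nat -> (N <= n)%nat ->
        nrm p (ssub (u m) (u n)) < eps) ->
     exists l, lp_summable p l /\ forall eps, 0 < eps -> exists N, forall n, (N <= n)%nat ->
        nrm p (ssub (u n) l) < eps.
Proof.
  intros Hp u Hu HC. assert (Hp0 : 0 < p) by lra.
  assert (CR : forall j, Cauchy_crit (fun n => Re (u n j))).
  { intros j e He. destruct (HC e He) as [N HN]. exists N. intros n m Hn Hm. unfold Rdist.
    eapply Rle_lt_trans; [|apply (HN n m); auto]. rewrite <- ssub_Re.
    eapply Rle_trans. apply Cx_Re_le. apply coord_le; auto. apply mem_sub; auto. }
  assert (CI : forall j, Cauchy_crit (fun n => Im (u n j))).
  { intros j e He. destruct (HC e He) as [N HN]. exists N. intros n m Hn Hm. unfold Rdist.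
    eapply Rle_lt_trans; [|apply (HN n m); auto]. rewrite <- ssub_Im.
    eapply Rle_trans. apply Cx_Im_le. apply coord_le; auto. apply mem_sub; auto. }
  set (l := fun j => mkCx (proj1_sig (R_complete _ (CR j))) (proj1_sig (R_complete _ (CI j)))).
  assert (LR : forall j, Un_cv (fun n => Re (u n j)) (Re (l j))).
  { intro j. unfold l; simpl. destruct (R_complete _ (CR j)); auto. }
  assert (LI : forall j, Un_cv (fun n => Im (u n j)) (Im (l j))).
  { intro j. unfold l; simpl. destruct (R_complete _ (CI j)); auto. }
  assert (KEY : forall e, 0 < e -> exists N, forall m, (N <= m)%nat -> forall J,
             fnorm p (mx (ssub (u m) l)) J <= e).
  { intros e He. destruct (HC e He) as [N HN]. exists N. intros m Hm J.
    assert (NU : forall nu, 0 < nu -> fnorm p (mx (ssub (u m) l)) J <= e + nu).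
    { intros nu Hnu.
      set (c := Rmin 1 (rpow nu p / (INR J + 1))).
      assert (Hc : 0 < c). { unfold c. apply Rmin_pos. lra. apply Rdiv_lt_0_compat. apply rpow_pos; lra.
        pose proof (pos_INR J); lra. }
      destruct (finite_close u l LR LI (c/2) ltac:(lra) J) as [K HK].
      set (k := max K N).
      eapply Rle_trans. apply (fnorm_le p _ (fun j => mx (ssub (u m) (u k)) j + c)). lra.
      { intros j Hj. split. apply Cx_mod_nonneg. unfold mx.
        replace (ssub (u m) l j) with (Cx_add (ssub (u m) (u k) j) (ssub (u k) l j))
          by (apply Cx_ext; unfold ssub, sadd, sscal; simpl; ring).
        eapply Rle_trans. apply Cx_mod_add. apply Rplus_le_compat_l.
        eapply Rle_trans. apply Cx_mod_le_ReIm. rewrite ssub_Re, ssub_Im.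
        destruct (HK k ltac:(unfold k; lia) j Hj). lra. }
      eapply Rle_trans. apply minkowski_fin; auto. intros; apply Cx_mod_nonneg. intros; lra.
      apply Rplus_le_compat.
      - eapply Rle_trans. apply fnorm_le_nrm; auto. apply mem_sub; auto. left; apply HN; unfold k; lia.
      - unfold fnorm. rewrite fsum_const. rewrite <- (rpow_inv nu p) by lra.
        apply rpow_le. apply Rlt_le, Rdiv_lt_0_compat; lra.
        assert (rpow c p <= c) by (apply rpow_le_self; auto; split; [lra|unfold c; apply Rmin_l]).
        assert (c <= rpow nu p / (INR J + 1)) by apply Rmin_r.
        pose proof (pos_INR J). pose proof (rpow_nonneg c p).
        apply Rle_trans with (INR J * c). apply Rmult_le_compat_l; lra.
        apply Rle_trans with ((INR J + 1) * (rpow nu p / (INR J + 1))).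
        nra. right; field; lra. }
    destruct (Rle_dec (fnorm p (mx (ssub (u m) l)) J) e) as [|Hn]; auto.
    specialize (NU ((fnorm p (mx (ssub (u m) l)) J - e)/2) ltac:(lra)). lra. }
  destruct (KEY 1 ltac:(lra)) as [N1 HN1].
  assert (M1 : lp_summable p (ssub (u N1) l)) by (eapply mem_fnorm; [lra|apply HN1; lia]).
  assert (Ml : lp_summable p l).
  { replace l with (ssub (u N1) (ssub (u N1) l)). apply mem_sub; auto.
    apply functional_extensionality; intro j; apply Cx_ext; unfold ssub, sadd, sscal; simpl; ring. }
  exists l. split; auto. intros e He. destruct (KEY (e/2) ltac:(lra)) as [N HN]. exists N. intros n Hn.
  assert (nrm p (ssub (u n) l) <= e/2). { apply nrm_le; auto. apply mem_sub; auto. lra. }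
  lra.
Qed.

Lemma lp_banach p : 1 <= p -> is_banach (lp p).
Proof.
  intros Hp. assert (Hp0 : 0 < p) by lra. unfold is_banach; simpl.
  repeat split.
  - apply mem_zero; auto.
  - intros; apply mem_add; auto.
  - intros; apply mem_scal; auto.
  - intros; apply functional_extensionality; intro j; apply Cx_ext; simpl; ring.
  - intros; apply functional_extensionality; intro j; apply Cx_ext; simpl; ring.
  - intros; apply functional_extensionality; intro j; apply Cx_ext; simpl; ring.
  - intros; apply functional_extensionality; intro j; apply Cx_ext; simpl; ring.
  - intros; apply functional_extensionality; intro j; apply Cx_ext; simpl; ring.
  - intros; apply functional_extensionality; intro j; apply Cx_ext; simpl; ring.
  - intros; apply functional_extensionality; intro j; apply Cx_ext; simpl; ring.
  - intros; apply functional_extensionality; intro j; apply Cx_ext; simpl; ring.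
  - intros; apply nrm_nonneg.
  - intros x Hx H0. apply functional_extensionality; intro j.
    pose proof (coord_le p x j Hp0 Hx). change (rpow (lp_sum p x) (1/p)) with (nrm p x) in H0.
    apply Cx_mod_eq0. pose proof (Cx_mod_nonneg (x j)). lra.
  - intros a x Hx. apply (nrm_scal p a x); auto.
  - intros x y Hx Hy. apply (minkowski p x y); auto.
  - intros u Hu HC. apply (lp_complete p Hp u Hu HC).
Qed.

Definition nn (X : NSpace) := forall x : V X, mem x -> 0 <= vnorm x.

Lemma bdd_abs {X Y} (f : BL X Y) : nn X -> exists M, 0 <= M /\ forall x, mem x -> vnorm (f x) <= M * vnorm x.
Proof.
  intros HX. destruct (op_bdd _ _ f) as [M HM]. exists (Rabs M). split. apply Rabs_pos.
  intros x Hx. eapply Rle_trans. apply HM; auto. apply Rmult_le_compat_r. apply HX; auto. apply RRle_abs.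
Qed.

Section Swap.
Context {X1 X2 Y1 Y2 : NSpace} (hX1 : nn X1) (hX2 : nn X2) (hY1 : nn Y1) (hY2 : nn Y2).
Context (f : BL X2 Y1) (g : BL X1 Y2).

Definition swf (z : V (dsum X1 X2)) : V (dsum Y1 Y2) := (op f (snd z), op g (fst z)).

Lemma swf_mem z : mem z -> mem (swf z).
Proof. intros [H1 H2]. split; simpl; apply op_mem; auto. Qed.

Lemma swf_add z w : mem z -> mem w -> swf (vadd z w) = vadd (swf z) (swf w).
Proof. intros [H1 H2] [H3 H4]. unfold swf; simpl. rewrite !op_add; auto. Qed.

Lemma swf_scal a z : mem z -> swf (vscal a z) = vscal a (swf z).
Proof. intros [H1 H2]. unfold swf; simpl. rewrite !op_scal; auto. Qed.

Lemma swf_bdd : exists M, forall z, mem z -> vnorm (swf z) <= M * vnorm z.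
Proof.
  destruct (bdd_abs f hX2) as [Mf [Hf1 Hf2]]. destruct (bdd_abs g hX1) as [Mg [Hg1 Hg2]].
  exists (Mf + Mg). intros [u v] [Hu Hv]. simpl in *. unfold swf; simpl.
  pose proof (Hf2 v Hv). pose proof (Hg2 u Hu). pose proof (hX1 u Hu). pose proof (hX2 v Hv).
  pose proof (hY1 _ (op_mem _ _ f v Hv)). pose proof (hY2 _ (op_mem _ _ g u Hu)).
  set (a := vnorm (f v)) in *. set (b := vnorm (g u)) in *. set (nu := vnorm u) in *. set (nv := vnorm v) in *.
  assert (a ^ 2 + b ^ 2 <= ((Mf+Mg) * (Mf+Mg)) * (nu ^ 2 + nv ^ 2)).
  { assert (a <= (Mf+Mg) * nv) by nra. assert (b <= (Mf+Mg)*nu) by nra. nra. }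
  rewrite <- (sqrt_square (Mf+Mg)) by lra. rewrite <- sqrt_mult by nra.
  apply sqrt_le_1_alt. lra.
Qed.

Definition swap : BL (dsum X1 X2) (dsum Y1 Y2) :=
  {| op := swf; op_mem := swf_mem; op_add := swf_add; op_scal := swf_scal; op_bdd := swf_bdd |}.
End Swap.

Lemma nn_dsum X Y : nn (dsum X Y).
Proof. intros z _. apply sqrt_pos. Qed.

Definition idf (X : NSpace) : BL X X.
Proof.
  refine {| op := fun x => x |}; auto. exists 1. intros; lra.
Defined.

Lemma nn_lp p : nn (lp p).
Proof. intros x _. apply nrm_nonneg. Qed.

Lemma swap_inv {X1 X2 Y1 Y2 : NSpace} h1 h2 h3 h4 (f : BL X2 Y1) (g : BL X1 Y2) (g' : BL Y2 X1) (f' : BL Y1 X2) :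
  (forall y, mem y -> f (f' y) = y) -> (forall x, mem x -> f' (f x) = x) ->
  (forall y, mem y -> g (g' y) = y) -> (forall x, mem x -> g' (g x) = x) ->
  invertible (@swap X1 X2 Y1 Y2 h1 h2 h3 h4 f g).
Proof.
  intros A1 A2 A3 A4. exists (@swap Y1 Y2 X1 X2 h3 h4 h1 h2 g' f').
  split; intros [a b] [Ha Hb]; simpl in *; unfold swf; simpl; f_equal; auto.
Qed.

Lemma positive_part p q (hp : 1 <= p) (hq : 1 <= q)
  (T : BL (lp p) (lp p)) (S : BL (lp q) (lp q)) (hT : invertible T) (hS : invertible S) :
  equiv_after_extension T S.
Proof.
  destruct hT as [Ti [T1 T2]]. destruct hS as [Si [S1 S2]].
  exists (lp q), (lp p). split. apply lp_banach; auto. split. apply lp_banach; auto.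
  exists (@swap (lp q) (lp p) (lp p) (lp q) (nn_lp q) (nn_lp p) (nn_lp p) (nn_lp q) T Si).
  exists (@swap (lp p) (lp q) (lp q) (lp p) (nn_lp p) (nn_lp q) (nn_lp q) (nn_lp p) (idf (lp q)) (idf (lp p))).
  split. { apply (swap_inv _ _ _ _ T Si S Ti); auto. }
  split. { apply (swap_inv _ _ _ _ (idf (lp q)) (idf (lp p)) (idf (lp p)) (idf (lp q))); auto. }
  intros [x y] [Hx Hy]. simpl in *. unfold swf; simpl. rewrite S2; auto.
Qed.

Definition Inf (P : nat -> Prop) := forall m, exists n, (m <= n)%nat /\ P n.

Lemma pig1 (f : nat -> R) e : 0 < e -> forall K lo (P : nat -> Prop), Inf P ->
  (forall n, P n -> lo <= f n <= lo + INR K * e) ->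
  exists Q : nat -> Prop, (forall n, Q n -> P n) /\ Inf Q /\ forall a b, Q a -> Q b -> Rabs (f a - f b) <= e.
Proof.
  intros He K. induction K; intros lo P HP Hb.
  - exists P. split; auto. split; auto. intros a b Ha Hb'. pose proof (Hb a Ha). pose proof (Hb b Hb').
    simpl in *. apply Rabs_le. lra.
  - destruct (classic (Inf (fun n => P n /\ f n <= lo + e))) as [HI|HN].
    + exists (fun n => P n /\ f n <= lo + e). split. tauto. split; auto.
      intros a b [Ha1 Ha2] [Hb1 Hb2]. pose proof (Hb a Ha1). pose proof (Hb b Hb1). apply Rabs_le. lra.
    + unfold Inf in HN. apply not_all_ex_not in HN. destruct HN as [m Hm].
      assert (HI : Inf (fun n => P n /\ lo + e < f n)).
      { intro m'. destruct (HP (max m m')) as [n [Hn1 Hn2]]. exists n. split. lia. split; auto.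
        destruct (Rlt_dec (lo + e) (f n)) as [|Hf]; auto. exfalso. apply Hm. exists n. split. lia. split; auto. lra. }
      destruct (IHK (lo + e) _ HI) as [Q [HQ1 [HQ2 HQ3]]].
      { intros n [Hn1 Hn2]. pose proof (Hb n Hn1). rewrite S_INR in H. lra. }
      exists Q. split. intros n Hn; apply HQ1; auto. split; auto.
Qed.

Lemma pig_bdd (f : nat -> R) e M (P : nat -> Prop) : 0 < e -> Inf P -> (forall n, P n -> Rabs (f n) <= M) ->
  exists Q : nat -> Prop, (forall n, Q n -> P n) /\ Inf Q /\ forall a b, Q a -> Q b -> Rabs (f a - f b) <= e.
Proof.
  intros He HP Hb. destruct (INR_archimed e (2*M) He) as [K HK].
  apply (pig1 f e He K (-M) P HP). intros n Hn. specialize (Hb n Hn). pose proof (Rle_abs (f n)). pose proof (Rabs_Ropp (f n)). pose proof (Rle_abs (- f n)). lra.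
Qed.

Lemma pig_coords (c : nat -> nat -> Cx) M e : 0 < e -> (forall n j, Cx_mod (c n j) <= M) ->
  forall J (P : nat -> Prop), Inf P ->
  exists Q : nat -> Prop, (forall n, Q n -> P n) /\ Inf Q /\
    forall a b j, Q a -> Q b -> (j < J)%nat ->
      Rabs (Re (c a j) - Re (c b j)) <= e /\ Rabs (Im (c a j) - Im (c b j)) <= e.
Proof.
  intros He HM J. induction J; intros P HP.
  - exists P. split; auto. split; auto. intros; lia.
  - destruct (IHJ P HP) as [Q1 [H11 [H12 H13]]].
    destruct (pig_bdd (fun n => Re (c n J)) e M Q1 He H12) as [Q2 [H21 [H22 H23]]].
    { intros n _. eapply Rle_trans. apply Cx_Re_le. apply HM. }
    destruct (pig_bdd (fun n => Im (c n J)) e M Q2 He H22) as [Q3 [H31 [H32 H33]]].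
    { intros n _. eapply Rle_trans. apply Cx_Im_le. apply HM. }
    exists Q3. split. intros; apply H11, H21, H31; auto. split; auto.
    intros a b j Ha Hb Hj. destruct (Nat.eq_dec j J) as [->|Hne].
    + split. apply H23; apply H31; auto. apply H33; auto.
    + apply H13; try lia; apply H21, H31; auto.
Qed.

Lemma pig_pair (c : nat -> nat -> Cx) M e : 0 < e -> (forall n j, Cx_mod (c n j) <= M) ->
  forall J L, exists a b, (L <= a)%nat /\ (a < b)%nat /\ forall j, (j < J)%nat ->
      Rabs (Re (c a j) - Re (c b j)) <= e /\ Rabs (Im (c a j) - Im (c b j)) <= e.
Proof.
  intros He HM J L. destruct (pig_coords c M e He HM J (fun _ => True)) as [Q [_ [HQ1 HQ2]]].
  { intro m; exists m; split; auto. }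
  destruct (HQ1 L) as [a [Ha1 Ha2]]. destruct (HQ1 (S a)) as [b [Hb1 Hb2]].
  exists a, b. split; [auto|]. split; [lia|]. intros; apply HQ2; auto.
Qed.

Lemma asymp al be a K b : 0 <= be -> be < al -> 0 < a -> 0 <= K -> 0 <= b ->
  exists N : nat, (1 <= N)%nat /\ K * rpow (INR N) be + b < a * rpow (INR N) al.
Proof.
  intros Hbe Hal Ha HK Hb. set (g := al - be). set (D := (K + b + 1) / a).
  destruct (INR_unbounded (exp (D / g))) as [N HN].
  assert (HN1 : 1 <= INR N). { pose proof (exp_ineq1_le (D/g)). assert (0 <= D/g).
    { unfold D, g. apply div_nonneg; [|lra]. apply div_nonneg; lra. } lra. }
  exists N. split. { destruct N. simpl in HN1; lra. lia. }
  assert (HNpos : 0 < INR N) by lra.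
  assert (E : rpow (INR N) al = rpow (INR N) be * rpow (INR N) g).
  { rewrite <- rpow_plus by auto. f_equal. unfold g; ring. }
  assert (G : D <= rpow (INR N) g).
  { rewrite rpow_eq by auto. unfold Rpower. eapply Rle_trans; [|apply exp_ineq1_le].
    assert (D/g <= ln (INR N)). { rewrite <- (ln_exp (D/g)). left; apply ln_increasing. apply exp_pos. lra. }
    assert (0 < g) by (unfold g; lra). 
    assert (D = g * (D/g)) by (field; lra). nra. }
  assert (B1 : 1 <= rpow (INR N) be) by (apply rpow_ge1; auto).
  rewrite E. assert (a * D = K + b + 1) by (unfold D; field; lra).
  assert (a * (rpow (INR N) be * rpow (INR N) g) >= a * (rpow (INR N) be * D)).
  { apply Rle_ge. apply Rmult_le_compat_l; [lra|]. apply Rmult_le_compat_l; lra. }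
  nra.
Qed.

Lemma mem_dom p y z : 0 < p -> lp_summable p y -> (forall j, z j = y j \/ z j = Cx_zero) -> lp_summable p z.
Proof.
  intros Hp Hy Hz. apply (mem_bdd p z (lp_sum p y)). intro n. eapply Rle_trans; [|apply (psum_le p y n Hy)].
  apply fsum_le. intros j _. unfold term. destruct (Hz j) as [E|E]; rewrite E. lra.
  rewrite Cx_mod_zero, rpow_0. apply rpow_nonneg.
Qed.

Definition ev (n : nat) : nat -> Cx := fun j => if Nat.eq_dec j n then Cx_one else Cx_zero.

Lemma ev_sum p n : 0 < p -> lp_summable p (ev n) /\ lp_sum p (ev n) = 1.
Proof.
  intros Hp. destruct (finite_supp p (ev n) (S n) Hp) as [H1 H2].
  { intros j Hj. unfold ev. destruct (Nat.eq_dec j n); [lia|auto]. }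
  split; auto. rewrite H2. unfold psum. simpl.
  rewrite (fsum_ext _ (fun _ => 0)). rewrite fsum_const. unfold term, ev.
  destruct (Nat.eq_dec n n); [|lia]. rewrite Cx_mod_one, rpow_one. ring.
  intros j Hj. unfold term, ev. destruct (Nat.eq_dec j n); [lia|]. rewrite Cx_mod_zero, rpow_0; auto.
Qed.

Lemma Cx_add_0l a : Cx_add Cx_zero a = a. Proof. apply Cx_ext; simpl; ring. Qed.
Lemma Cx_add_0r a : Cx_add a Cx_zero = a. Proof. apply Cx_ext; simpl; ring. Qed.
Lemma Cx_mul_0r a : Cx_mul a Cx_zero = Cx_zero. Proof. apply Cx_ext; simpl; ring. Qed.

Lemma inv_lt' a b : 0 < a -> a < b -> 1/b < 1/a.
Proof. intros. unfold Rdiv. rewrite !Rmult_1_l. apply Rinv_lt_contravar; nra. Qed.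

Section Pitt.
Variables (r s : R) (hr : 1 <= r) (hs : 1 <= s).
Variables (A B : (nat -> Cx) -> (nat -> Cx)).
Hypothesis Amem : forall x, lp_summable r x -> lp_summable s (A x).
Hypothesis Aadd : forall x y, lp_summable r x -> lp_summable r y -> A (sadd x y) = sadd (A x) (A y).
Hypothesis Ascal : forall a x, lp_summable r x -> A (sscal a x) = sscal a (A x).
Variables MA MB : R.
Hypothesis MApos : 0 < MA.
Hypothesis MBpos : 0 < MB.
Hypothesis Abd : forall x, lp_summable r x -> nrm s (A x) <= MA * nrm r x.
Hypothesis Bbd : forall y, lp_summable s y -> nrm r (B y) <= MB * nrm s y.
Hypothesis BA : forall x, lp_summable r x -> B (A x) = x.

Let r0 : 0 < r. Proof. lra. Qed.
Let s0 : 0 < s. Proof. lra. Qed.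

Lemma A_zero : A szero = szero.
Proof.
  assert (E : szero = sscal Cx_zero szero) by (apply functional_extensionality; intro; apply Cx_ext; simpl; ring).
  rewrite E at 1. rewrite Ascal by (apply mem_zero; auto). apply functional_extensionality; intro; apply Cx_ext; simpl; ring.
Qed.

Lemma A_sub x y : lp_summable r x -> lp_summable r y -> A (ssub x y) = ssub (A x) (A y).
Proof. intros. unfold ssub. rewrite Aadd, Ascal; auto. apply mem_scal; auto. Qed.

Definition rho := rpow 2 (1/r).
Definition lo := rpow (rho / MB) s.
Definition hi := rpow (MA * rho) s.

Lemma rho_pos : 0 < rho. Proof. apply rpow_pos; lra. Qed.
Lemma lo_pos : 0 < lo. Proof. apply rpow_pos. apply Rdiv_lt_0_compat; auto. apply rho_pos. Qed.
Lemma hi_pos : 0 < hi. Proof. apply rpow_pos. pose proof rho_pos. nra. Qed.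

Lemma lp_sum_nrm p x : 0 < p -> lp_summable p x -> lp_sum p x = rpow (nrm p x) p.
Proof. intros. unfold nrm. rewrite rpow_inv'; auto. apply lp_sum_nonneg; auto. Qed.

Lemma step tau : 0 < tau -> forall L, exists x z w L', (L < L')%nat /\
  lp_summable r x /\ lp_summable s z /\ lp_summable s w /\
  (forall j, ((j < L)%nat \/ (L' <= j)%nat) -> x j = Cx_zero /\ z j = Cx_zero) /\
  lp_sum r x = 2 /\ A x = sadd z w /\ lp_sum s w <= 2 * tau /\ lo - 2 * tau <= lp_sum s z <= hi.
Proof.
  intros Ht L.
  set (c := fun n => A (ev n)).
  assert (Hc : forall n j, Cx_mod (c n j) <= MA).
  { intros n j. destruct (ev_sum r n r0) as [E1 E2]. eapply Rle_trans. apply (coord_le s (c n) j s0 (Amem _ E1)).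
    eapply Rle_trans. apply Abd; auto. unfold nrm. rewrite E2, rpow_one. lra. }
  set (d := tau / (INR L + 1)).
  assert (Hd : 0 < d) by (unfold d; apply Rdiv_lt_0_compat; [lra|pose proof (pos_INR L); lra]).
  set (e := rpow d (1/s) / 2).
  assert (He : 0 < e) by (unfold e; pose proof (rpow_pos d (1/s) Hd); lra).
  destruct (pig_pair c MA e He Hc L L) as [a [b [Ha [Hab Hcl]]]].
  destruct (ev_sum r a r0) as [Ea1 Ea2]. destruct (ev_sum r b r0) as [Eb1 Eb2].
  set (x := ssub (ev a) (ev b)).
  assert (Mx : lp_summable r x) by (apply mem_sub; auto).
  set (y := A x).
  assert (Ey : y = ssub (c a) (c b)) by (apply A_sub; auto).
  assert (My : lp_summable s y) by (apply Amem; auto).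
  destruct (infs_tail (term s y) (lp_sum s y) (term_nonneg s y) (lp_sum_spec s y My) tau Ht (S b)) as [L' [HL'1 HL'2]].
  set (z := fun j => if andb (Nat.leb L j) (Nat.ltb j L') then y j else Cx_zero).
  set (w := fun j => if andb (Nat.leb L j) (Nat.ltb j L') then Cx_zero else y j).
  set (hd := fun j => if Nat.ltb j L then y j else Cx_zero).
  set (tl := fun j => if Nat.leb L' j then y j else Cx_zero).
  set (fr := fun j => if Nat.ltb j L' then y j else Cx_zero).
  assert (Mz : lp_summable s z) by (apply (mem_dom s y); auto; intro j; unfold z; destruct (andb _ _); auto).
  assert (Mw : lp_summable s w) by (apply (mem_dom s y); auto; intro j; unfold w; destruct (andb _ _); auto).
  assert (Mhd : lp_summable s hd) by (apply (mem_dom s y); auto; intro j; unfold hd; destruct (Nat.ltb _ _); auto).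
  assert (Mtl : lp_summable s tl) by (apply (mem_dom s y); auto; intro j; unfold tl; destruct (Nat.leb _ _); auto).
  assert (Mfr : lp_summable s fr) by (apply (mem_dom s y); auto; intro j; unfold fr; destruct (Nat.ltb _ _); auto).
  assert (E1 : y = sadd z w).
  { apply functional_extensionality; intro j. unfold sadd, z, w. destruct (andb _ _).
    rewrite Cx_add_0r; auto. rewrite Cx_add_0l; auto. }
  assert (E2 : w = sadd hd tl).
  { apply functional_extensionality; intro j. unfold sadd, w, hd, tl.
    destruct (Nat.leb_spec L j); destruct (Nat.ltb_spec j L'); destruct (Nat.ltb_spec j L); destruct (Nat.leb_spec L' j);
    simpl; try lia; rewrite ?Cx_add_0r, ?Cx_add_0l; auto. }
  assert (E3 : y = sadd fr tl).
  { apply functional_extensionality; intro j. unfold sadd, fr, tl.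
    destruct (Nat.ltb_spec j L'); destruct (Nat.leb_spec L' j); try lia; rewrite ?Cx_add_0r, ?Cx_add_0l; auto. }
  assert (S1 : lp_sum s y = lp_sum s z + lp_sum s w).
  { rewrite E1 at 1. apply disj_sum; auto. intro j; unfold z, w; destruct (andb _ _); auto. }
  assert (S2 : lp_sum s w = lp_sum s hd + lp_sum s tl).
  { rewrite E2 at 1. apply disj_sum; auto. intro j; unfold hd, tl.
    destruct (Nat.ltb_spec j L); destruct (Nat.leb_spec L' j); auto; lia. }
  assert (S3 : lp_sum s y = lp_sum s fr + lp_sum s tl).
  { rewrite E3 at 1. apply disj_sum; auto. intro j; unfold fr, tl.
    destruct (Nat.ltb_spec j L'); destruct (Nat.leb_spec L' j); auto; lia. }
  assert (S4 : lp_sum s fr = psum s y L').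
  { destruct (finite_supp s fr L' s0) as [_ ->]. intros j Hj; unfold fr; destruct (Nat.ltb_spec j L'); auto; lia.
    unfold psum. apply fsum_ext. intros j Hj. unfold term, fr. destruct (Nat.ltb_spec j L'); auto; lia. }
  assert (S5 : lp_sum s hd <= tau).
  { destruct (finite_supp s hd L s0) as [_ ->]. intros j Hj; unfold hd; destruct (Nat.ltb_spec j L); auto; lia.
    unfold psum. eapply Rle_trans. apply (fsum_le _ (fun _ => d)).
    - intros j Hj. unfold term, hd. destruct (Nat.ltb_spec j L); [|lia].
      rewrite <- (rpow_inv' d s) by lra. apply rpow_le; [lra|].
      rewrite Ey. eapply Rle_trans. apply Cx_mod_le_ReIm. rewrite ssub_Re, ssub_Im.
      destruct (Hcl j Hj). unfold e in *. lra.
    - rewrite fsum_const. unfold d. pose proof (pos_INR L).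
      apply Rle_trans with ((INR L + 1) * (tau / (INR L + 1))). apply Rmult_le_compat_r. left; apply Rdiv_lt_0_compat; lra. lra.
      right; field; lra. }
  assert (S6 : lp_sum s tl <= tau) by (unfold psum in S4; lra).
  assert (Sw : lp_sum s w <= 2 * tau) by lra.
  assert (Sw0 : 0 <= lp_sum s w) by (apply lp_sum_nonneg; auto).
  assert (Xv : forall j, ((j < L)%nat \/ (L' <= j)%nat) -> x j = Cx_zero).
  { intros j Hj. unfold x, ssub, sadd, sscal, ev. destruct (Nat.eq_dec j a); [lia|]. destruct (Nat.eq_dec j b); [lia|].
    rewrite Cx_mul_0r, Cx_add_0l; auto. }
  assert (Sx : lp_sum r x = 2).
  { unfold x, ssub. rewrite disj_sum; auto. 2: apply mem_scal; auto.
    destruct (scal_sum_eq r Cx_mone (ev b) r0 Eb1) as [_ ->]. rewrite Ea2, Eb2, Cx_mod_mone, rpow_one. ring.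
    intro j. unfold sscal, ev. destruct (Nat.eq_dec j a). right. destruct (Nat.eq_dec j b). lia. apply Cx_mul_0r. left; auto. }
  assert (Nx : nrm r x = rho) by (unfold nrm, rho; rewrite Sx; auto).
  assert (Ny1 : nrm s y <= MA * rho) by (rewrite <- Nx; apply Abd; auto).
  assert (Ny2 : rho <= MB * nrm s y). { rewrite <- Nx. rewrite <- (BA x Mx) at 1. apply Bbd; auto. }
  assert (Sy1 : lp_sum s y <= hi). { rewrite lp_sum_nrm by auto. apply rpow_le; [lra|]. auto. }
  assert (Sy2 : lo <= lp_sum s y). { rewrite lp_sum_nrm by auto. apply rpow_le; [lra|].
    apply Rmult_le_reg_l with MB; auto. unfold Rdiv. rewrite <- Rmult_assoc, (Rmult_comm MB), Rmult_assoc, Rinv_r by lra. lra. }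
  exists x, z, w, L'. split. lia. split; auto. split; auto. split; auto. split.
  { intros j Hj. split; auto. unfold z. destruct (Nat.leb_spec L j); destruct (Nat.ltb_spec j L'); simpl; auto; lia. }
  split; auto. split; auto. split; auto. split. lra. pose proof (lp_sum_nonneg s w Mw). lra.
Qed.

Lemma build tau : 0 < tau -> forall N : nat, exists X Z W L,
  lp_summable r X /\ lp_summable s Z /\ lp_summable s W /\
  (forall j, (L <= j)%nat -> X j = Cx_zero /\ Z j = Cx_zero) /\
  lp_sum r X = 2 * INR N /\ A X = sadd Z W /\
  INR N * (lo - 2 * tau) <= lp_sum s Z <= INR N * hi /\ nrm s W <= INR N * rpow (2 * tau) (1/s).
Proof.
  intros Ht N. induction N.
  - exists szero, szero, szero, O. destruct (finite_supp r szero O r0) as [M1 E1]; auto.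
    destruct (finite_supp s szero O s0) as [M2 E2]; auto.
    split; auto. split; auto. split; auto. split; auto. split. rewrite E1; simpl; unfold psum; simpl; ring.
    split. rewrite A_zero. apply functional_extensionality; intro; unfold sadd, szero; rewrite Cx_add_0l; auto.
    split. rewrite E2; unfold psum; simpl; lra. unfold nrm. rewrite E2. unfold psum; simpl. rewrite rpow_0; lra.
  - destruct IHN as [X [Z [W [L [MX [MZ [MW [HV [SX [EA [[SZ1 SZ2] NW]]]]]]]]]]].
    destruct (step tau Ht L) as [x [z [w [L' [HLL [Mx [Mz [Mw [Hv [Sx [Ea [Sw [Sz1 Sz2]]]]]]]]]]]]].
    assert (D1 : forall j, X j = Cx_zero \/ x j = Cx_zero).
    { intro j. destruct (Nat.lt_ge_cases j L). right; apply Hv; auto. left; apply HV; auto. }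
    assert (D2 : forall j, Z j = Cx_zero \/ z j = Cx_zero).
    { intro j. destruct (Nat.lt_ge_cases j L). right; apply Hv; auto. left; apply HV; auto. }
    exists (sadd X x), (sadd Z z), (sadd W w), L'.
    split. apply mem_add; auto. split. apply mem_add; auto. split. apply mem_add; auto.
    split. { intros j Hj. unfold sadd. destruct (HV j ltac:(lia)) as [-> ->]. destruct (Hv j ltac:(lia)) as [-> ->].
      rewrite Cx_add_0l; auto. }
    split. { rewrite disj_sum, SX, Sx by auto. rewrite S_INR; ring. }
    split. { rewrite Aadd, EA, Ea by auto. apply functional_extensionality; intro j; apply Cx_ext; unfold sadd; simpl; ring. }
    split. { rewrite disj_sum by auto. rewrite S_INR. split; lra. }
    eapply Rle_trans. apply minkowski; auto. rewrite S_INR.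
    assert (nrm s w <= rpow (2 * tau) (1/s)). { unfold nrm. apply rpow_le. apply Rlt_le, Rdiv_lt_0_compat; lra. auto. }
    lra.
Qed.

Theorem pitt : r <> s -> False.
Proof.
  intros Hrs. pose proof rho_pos. pose proof lo_pos. pose proof hi_pos.
  assert (KEYN : forall N : nat, (1 <= N)%nat -> exists X Z W,
     lp_summable r X /\ lp_summable s Z /\ lp_summable s W /\ nrm r X = rho * rpow (INR N) (1/r) /\
     A X = sadd Z W /\ rpow (lo/2) (1/s) * rpow (INR N) (1/s) <= nrm s Z /\
     nrm s Z <= rpow hi (1/s) * rpow (INR N) (1/s) /\ nrm s W <= 1).
  { intros N HN. assert (HN' : 1 <= INR N) by (apply (le_INR 1); auto).
    set (tau := Rmin (lo/4) (rpow (/ INR N) s / 2)).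
    assert (Ht : 0 < tau). { unfold tau. apply Rmin_pos. lra. pose proof (rpow_pos (/INR N) s ltac:(apply Rinv_0_lt_compat; lra)). lra. }
    destruct (build tau Ht N) as [X [Z [W [L [MX [MZ [MW [_ [SX [EA [[SZ1 SZ2] NW]]]]]]]]]]].
    exists X, Z, W. split; auto. split; auto. split; auto. split.
    { unfold nrm, rho. rewrite SX, rpow_mul by lra. auto. }
    split; auto. split.
    { unfold nrm. rewrite <- rpow_mul by lra. apply rpow_le. apply Rlt_le, Rdiv_lt_0_compat; lra.
      assert (tau <= lo/4) by apply Rmin_l. nra. }
    split.
    { unfold nrm. rewrite <- rpow_mul by lra. apply rpow_le. apply Rlt_le, Rdiv_lt_0_compat; lra. lra. }
    eapply Rle_trans. apply NW.
    assert (2 * tau <= rpow (/ INR N) s). { assert (tau <= rpow (/INR N) s / 2) by apply Rmin_r. lra. }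
    assert (rpow (2*tau) (1/s) <= / INR N).
    { rewrite <- (rpow_inv (/ INR N) s) by (auto; left; apply Rinv_0_lt_compat; lra).
      apply rpow_le; auto. apply Rlt_le, Rdiv_lt_0_compat; lra. }
    apply Rle_trans with (INR N * / INR N). apply Rmult_le_compat_l; lra. right; field; lra. }
  assert (ZW : forall Z W, lp_summable s Z -> lp_summable s W -> nrm s Z <= nrm s (sadd Z W) + nrm s W).
  { intros Z W HZ HW. replace Z with (ssub (sadd Z W) W) at 1.
    unfold ssub. eapply Rle_trans. apply minkowski; auto. apply mem_add; auto. apply mem_scal; auto.
    rewrite nrm_scal, Cx_mod_mone; auto. lra.
    apply functional_extensionality; intro j; apply Cx_ext; unfold ssub, sadd, sscal; simpl; ring. }
  destruct (Rlt_dec s r) as [Hsr|Hsr].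
  - destruct (asymp (1/s) (1/r) (rpow (lo/2) (1/s)) (MA * rho) 1) as [N [HN HN2]].
    { apply Rlt_le, Rdiv_lt_0_compat; lra. }
    { apply inv_lt'; lra. } { apply rpow_pos; lra. } { nra. } { lra. }
    destruct (KEYN N HN) as [X [Z [W [MX [MZ [MW [NX [EA [NZ1 [NZ2 NW]]]]]]]]]].
    pose proof (ZW Z W MZ MW). rewrite <- EA in H2. pose proof (Abd X MX). rewrite NX in H3.
    lra.
  - assert (Hrs' : r < s) by lra.
    destruct (asymp (1/r) (1/s) rho (MB * rpow hi (1/s)) MB) as [N [HN HN2]].
    { apply Rlt_le, Rdiv_lt_0_compat; lra. }
    { apply inv_lt'; lra. } { auto. } { pose proof (rpow_nonneg hi (1/s)). nra. } { lra. }
    destruct (KEYN N HN) as [X [Z [W [MX [MZ [MW [NX [EA [NZ1 [NZ2 NW]]]]]]]]]].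
    assert (nrm r X <= MB * nrm s (A X)) by (rewrite <- (BA X MX) at 1; apply Bbd; auto).
    assert (nrm s (A X) <= nrm s Z + nrm s W) by (rewrite EA; apply minkowski; auto).
    rewrite NX in H2. nra.
Qed.
End Pitt.

Lemma fst_le {X Y : NSpace} (z : V (dsum X Y)) : 0 <= vnorm (fst z) -> vnorm (fst z) <= vnorm z.
Proof.
  intros H. simpl. rewrite <- (sqrt_pow2 (vnorm (fst z))) at 1 by auto.
  apply sqrt_le_1_alt. pose proof (pow2_ge_0 (vnorm (snd z))). lra.
Qed.

Lemma pair_norm {X Y : NSpace} (x : V X) (y : V Y) : vnorm y = 0 -> 0 <= vnorm x ->
  @vnorm (dsum X Y) (x, y) = vnorm x.
Proof. intros H1 H2. change (sqrt (vnorm x ^ 2 + vnorm y ^ 2) = vnorm x). rewrite H1. replace (0 ^ 2) with 0 by ring. rewrite Rplus_0_r. apply sqrt_pow2; auto. Qed.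

Lemma from_iso r s (hr : 1 <= r) (hs : 1 <= s) (Z : NSpace) (hZ : is_banach Z)
  (F : BL (dsum (lp r) triv) (dsum (lp s) Z)) (G : BL (dsum (lp s) Z) (dsum (lp r) triv))
  (FG : forall y, mem y -> F (G y) = y) (GF : forall x, mem x -> G (F x) = x) : r <> s -> False.
Proof.
  intros Hrs.
  destruct hZ as [Z0 [Zadd [Zscal [_ [_ [_ [_ [_ [Zmul [_ [Zdist [_ [_ [Znsc _]]]]]]]]]]]]]].
  set (w0 := vscal Cx_zero (@vzero Z)).
  assert (Mw : mem w0) by (apply Zscal; auto).
  assert (Nw : vnorm w0 = 0) by (unfold w0; rewrite Znsc, Cx_mod_zero by auto; ring).
  assert (Aw : vadd w0 w0 = w0).
  { unfold w0. rewrite <- Zdist by auto. f_equal. apply Cx_ext; simpl; ring. }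
  assert (Sw : forall a, vscal a w0 = w0).
  { intro a. unfold w0. rewrite <- Zmul by auto. f_equal. apply Cx_ext; simpl; ring. }
  set (A := fun y : nat -> Cx => fst (op G (y, w0)) : nat -> Cx).
  set (B := fun x : nat -> Cx => fst (op F (x, tt)) : nat -> Cx).
  destruct (bdd_abs G (nn_dsum _ _)) as [MG [HMG1 HMG2]].
  destruct (bdd_abs F (nn_dsum _ _)) as [MF [HMF1 HMF2]].
  apply (pitt s r hs hr A B) with (MA := MG + 1) (MB := MF + 1); auto; try lra.
  - intros x Hx. unfold A. apply (op_mem _ _ G (x, w0)). split; auto.
  - intros x y Hx Hy. unfold A.
    replace (sadd x y, w0) with (@vadd (dsum (lp s) Z) (x, w0) (y, w0)) by (simpl; rewrite Aw; auto).
    rewrite op_add by (split; auto). auto.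
  - intros a x Hx. unfold A.
    replace (sscal a x, w0) with (@vscal (dsum (lp s) Z) a (x, w0)) by (simpl; rewrite Sw; auto).
    rewrite op_scal by (split; auto). auto.
  - intros x Hx. unfold A.
    assert (Hm : mem (op G (x, w0))) by (apply op_mem; split; auto).
    eapply Rle_trans. apply (fst_le (op G (x, w0))). apply nrm_nonneg.
    eapply Rle_trans. apply HMG2. split; auto. replace (vnorm _) with (nrm s x) by (symmetry; apply (@pair_norm (lp s) Z x w0); auto; apply nrm_nonneg).
    pose proof (nrm_nonneg s x). change (rpow (lp_sum s x) (1/s)) with (nrm s x). nra.
  - intros x Hx. unfold B.
    assert (Hm : mem (op F (x, tt))) by (apply op_mem; split; simpl; auto).
    eapply Rle_trans. apply (fst_le (op F (x, tt))). apply nrm_nonneg.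
    eapply Rle_trans. apply HMF2. split; [exact Hx|exact I].
    replace (vnorm _) with (nrm r x) by (symmetry; apply (@pair_norm (lp r) triv x tt); auto; apply nrm_nonneg).
    pose proof (nrm_nonneg r x). change (rpow (lp_sum r x) (1/r)) with (nrm r x). nra.
  - intros y Hy. unfold A, B.
    transitivity (fst (op F (op G (y, w0)))).
    { f_equal. f_equal. destruct (op G (y, w0)) as [u []]; reflexivity. }
    rewrite FG; auto. split; auto.
Qed.

Lemma negative_part p q (hp : 1 <= p) (hq : 1 <= q) (hpq : p <> q)
  (T : BL (lp p) (lp p)) (S : BL (lp q) (lp q)) : ~ equiv_after_one_sided_extension T S.
Proof.
  intros [[X' [hX [E [F [_ [[G [G1 G2]] _]]]]]] | [Y' [hY [E [F [_ [[G [G1 G2]] _]]]]]]].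
  - apply (from_iso q p hq hp X' hX G F); auto.
  - apply (from_iso p q hp hq Y' hY F G); auto.
Qed.

Theorem corollary4p4 (p q : R) (hp : 1 <= p) (hq : 1 <= q) (hpq : p <> q)
  (T : BL (lp p) (lp p)) (S : BL (lp q) (lp q))
  (hT : invertible T) (hS : invertible S) :
  equiv_after_extension T S /\ ~ equiv_after_one_sided_extension T S.
Proof. split. apply positive_part; auto. apply negative_part; auto. Qed.
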